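(* In the Euclidean plane with coordinates $(x,y)$, $r^2=x^2+y^2$, let $V=\frac{M(y/r^2)}{r^4}$ where $M$ is an arbitrary smooth function. Then $V$ satisfies $\frac{x^2-y^2}{2}V_{,x}+xyV_{,y}+2xV=0$, and for the system $\ddot x=-V_{,x}$, $\ddot y=-V_{,y}$ restricted to zero energy $\dot x^2+\dot y^2+2V=0$, the quantity $$I=\frac{x^2-y^2}{2}\dot x+xy\dot y$$ is a first integral. Moreover, every zero-energy solution with $I=0$ (and $r\neq0$) lies on a circle $r=c_1\cos\theta$, i.e. $(x-\tfrac{c_1}{2})^2+y^2=\tfrac{c_1^2}{4}$ for some constant $c_1\ne0$, and along it $\theta(t)$ satisfies $t-t_0=c_1^3\int\frac{\cos^2\theta\,d\theta}{\sqrt{-2M(\tan\theta/c_1)}}$.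
   Context: Polar coordinates $x=r\cos\theta$, $y=r\sin\theta$. A first integral of the constrained system is a function whose time derivative vanishes along every solution satisfying the zero-energy constraint. *)

(* Defs.v *)
From Stdlib Require Import Reals.
From Coquelicot Require Import Coquelicot.
Open Scope R_scope.

Definition smooth (M : R -> R) : Prop := forall (n : nat) (u : R), ex_derive_n M n u.

Definition r2 (x y : R) : R := x ^ 2 + y ^ 2.

Definition V (M : R -> R) (x y : R) : R := M (y / r2 x y) / (r2 x y) ^ 2.

Definition dVx (M : R -> R) (x y : R) : R := Derive (fun u => V M u y) x.
Definition dVy (M : R -> R) (x y : R) : R := Derive (fun v => V M x v) y.

Definition Iq (x y vx vy : R) : R := (x ^ 2 - y ^ 2) / 2 * vx + x * y * vy.

Definition in_open (a b : Rbar) (t : R) : Prop := Rbar_lt a t /\ Rbar_lt t b.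

Definition zero_energy_solution (M : R -> R) (a b : Rbar) (x y : R -> R) : Prop :=
  forall t, in_open a b t ->
    ~ (x t = 0 /\ y t = 0) /\
    ex_derive x t /\ ex_derive y t /\
    ex_derive (Derive x) t /\ ex_derive (Derive y) t /\
    Derive (Derive x) t = - dVx M (x t) (y t) /\
    Derive (Derive y) t = - dVy M (x t) (y t) /\
    (Derive x t) ^ 2 + (Derive y t) ^ 2 + 2 * V M (x t) (y t) = 0.

(* Main.v *)
Require Import Defs.
From Stdlib Require Import Reals Lra Lia Psatz.
From Coquelicot Require Import Coquelicot.
Open Scope R_scope.

Lemma smooth_ex_derive M : smooth M -> forall u, ex_derive M u.
Proof. intros H u. exact (H 1%nat u). Qed.

Lemma r2_pos x y : ~ (x = 0 /\ y = 0) -> 0 < r2 x y.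
Proof.
  intros H. unfold r2.
  destruct (Req_dec x 0) as [Hx|Hx]; destruct (Req_dec y 0) as [Hy|Hy].
  - tauto.
  - subst. assert (0 < y^2) by (apply pow2_gt_0; auto). lra.
  - assert (0 < x^2) by (apply pow2_gt_0; auto). nra.
  - assert (0 < x^2) by (apply pow2_gt_0; auto). nra.
Qed.

Lemma dVx_eq M x y : smooth M -> ~ (x = 0 /\ y = 0) ->
  dVx M x y = - 2 * x * y * Derive M (y / r2 x y) / (r2 x y) ^ 4
              - 4 * x * M (y / r2 x y) / (r2 x y) ^ 3.
Proof.
  intros HM H. pose proof (r2_pos x y H) as Hr. unfold dVx.
  apply is_derive_unique. unfold V. unfold r2 in *.
  auto_derive.
  - repeat split; try apply smooth_ex_derive; auto; nra.
  - change (fun x => M x) with M. assert (Eu : y * / (x * (x * 1) + y * (y * 1)) = y / (x^2+y^2))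
      by (unfold Rdiv; f_equal; f_equal; ring).
    rewrite Eu. field. nra.
Qed.

Lemma dVy_eq M x y : smooth M -> ~ (x = 0 /\ y = 0) ->
  dVy M x y = (x^2 - y^2) * Derive M (y / r2 x y) / (r2 x y) ^ 4
              - 4 * y * M (y / r2 x y) / (r2 x y) ^ 3.
Proof.
  intros HM H. pose proof (r2_pos x y H) as Hr. unfold dVy.
  apply is_derive_unique. unfold V. unfold r2 in *.
  auto_derive.
  - repeat split; try apply smooth_ex_derive; auto; nra.
  - change (fun x => M x) with M. assert (Eu : y * / (x * (x * 1) + y * (y * 1)) = y / (x^2+y^2))
      by (unfold Rdiv; f_equal; f_equal; ring).
    rewrite Eu. field. nra.
Qed.

Lemma pde M x y : smooth M -> ~ (x = 0 /\ y = 0) ->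
  (x ^ 2 - y ^ 2) / 2 * dVx M x y + x * y * dVy M x y + 2 * x * V M x y = 0.
Proof.
  intros HM H. pose proof (r2_pos x y H) as Hr.
  rewrite dVx_eq, dVy_eq by auto. unfold V.
  unfold r2 in *. field. nra.
Qed.

Lemma firstint M a b x y t : smooth M -> zero_energy_solution M a b x y -> in_open a b t ->
  is_derive (fun s => Iq (x s) (y s) (Derive x s) (Derive y s)) t 0.
Proof.
  intros HM Hs Ht. destruct (Hs t Ht) as (Hnz & Hx & Hy & Hx' & Hy' & Ex & Ey & En).
  pose proof (pde M (x t) (y t) HM Hnz) as P.
  unfold Iq. auto_derive.
  - repeat split; auto.
  - change (fun x0 : R => x x0) with x. change (fun x0 : R => y x0) with y.
    change (fun x0 : R => Derive x x0) with (Derive x).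
    change (fun x0 : R => Derive y x0) with (Derive y).
    rewrite Ex, Ey.
    transitivity (x t * (Derive x t ^ 2 + Derive y t ^ 2 + 2 * V M (x t) (y t))
       - ((x t ^ 2 - y t ^ 2) / 2 * dVx M (x t) (y t) + x t * y t * dVy M (x t) (y t) + 2 * x t * V M (x t) (y t))).
    + field.
    + rewrite En, P. ring.
Qed.

Lemma between a b t0 t s : in_open a b t0 -> in_open a b t ->
  Rmin t0 t <= s <= Rmax t0 t -> in_open a b s.
Proof.
  intros [H1 H2] [H3 H4] Hs. unfold Rmin, Rmax in Hs.
  destruct (Rle_dec t0 t); split.
  - apply Rbar_lt_le_trans with t0; auto. simpl; lra.
  - apply Rbar_le_lt_trans with t; auto. simpl; lra.
  - apply Rbar_lt_le_trans with t; auto. simpl; lra.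
  - apply Rbar_le_lt_trans with t0; auto. simpl; lra.
Qed.

Lemma locally_in_open a b t : in_open a b t -> locally t (in_open a b).
Proof.
  intros [H1 H2]. apply (filter_and (F := locally t)).
  - exact (open_Rbar_gt' (Finite t) a H1).
  - exact (open_Rbar_lt' (Finite t) b H2).
Qed.

Lemma deriv0_const a b f : (forall t, in_open a b t -> is_derive f t 0) ->
  forall t0 t1, in_open a b t0 -> in_open a b t1 -> f t0 = f t1.
Proof.
  intros Hd t0 t1 H0 H1.
  destruct (MVT_gen f t0 t1 (fun _ => 0)) as (c & _ & Hc).
  - intros s Hs. apply Hd. apply (between a b t0 t1); auto. lra.
  - intros s Hs. apply continuity_pt_filterlim. apply (ex_derive_continuous (K:=R_AbsRing) (V:=R_NormedModule) f).
    exists 0. apply Hd. apply (between a b t0 t1); auto.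
  - lra.
Qed.

(* a continuous function locally taking values in a "discrete" set is locally constant *)
Lemma cont_ball (f : R -> R) (s eps : R) : continuous f s -> 0 < eps ->
  locally s (fun s' => Rabs (f s' - f s) < eps).
Proof.
  intros Hc He. pose proof (proj1 (filterlim_locally f (f s)) Hc (mkposreal eps He)) as H.
  eapply filter_imp; [|exact H]. intros s' Hb. exact Hb.
Qed.

Lemma circle_k M a b x y : zero_energy_solution M a b x y ->
  (forall t, in_open a b t -> Iq (x t) (y t) (Derive x t) (Derive y t) = 0) ->
  (exists t, in_open a b t /\ x t <> 0) ->
  exists k, k <> 0 /\ forall s, in_open a b s -> x s = k * r2 (x s) (y s).
Proof.
  intros Hs HI [ts [Hts Hxs]].
  assert (Hd : forall t, in_open a b t -> is_derive (fun s => x s / r2 (x s) (y s)) t 0).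
  { intros t Ht. destruct (Hs t Ht) as (Hnz & Hx & Hy & _).
    pose proof (r2_pos _ _ Hnz) as Hr. pose proof (HI t Ht) as Ht0.
    unfold r2 in *. unfold Iq in Ht0. auto_derive.
    - repeat split; auto; nra.
    - change (fun x0 : R => x x0) with x. change (fun x0 : R => y x0) with y.
      transitivity (- 2 * ((x t ^ 2 - y t ^ 2) / 2 * Derive x t + x t * y t * Derive y t)
                     / (x t ^ 2 + y t ^ 2)^2).
      + field. nra.
      + rewrite Ht0. field. nra. }
  pose proof (deriv0_const a b _ Hd) as Hc.
  exists (x ts / r2 (x ts) (y ts)). destruct (Hs ts Hts) as (Hnz & _).
  pose proof (r2_pos _ _ Hnz) as Hr. split.
  - intro E. apply Hxs. apply (Rmult_eq_compat_r (r2 (x ts) (y ts))) in E.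
    field_simplify in E; lra.
  - intros s Hs'. rewrite <- (Hc s ts Hs' Hts).
    destruct (Hs s Hs') as (Hnz' & _). pose proof (r2_pos _ _ Hnz') as Hr'.
    field. lra.
Qed.

Lemma IZR_small (z : Z) : Rabs (IZR z) < 1 -> z = 0%Z.
Proof.
  intros H. apply Rabs_def2 in H. destruct H as [H1 H2].
  assert (H3 : (-1 < z)%Z) by (apply lt_IZR; simpl; lra).
  assert (H4 : (z < 1)%Z) by (apply lt_IZR; simpl; lra). lia.
Qed.

Section Theta.
Variables (M : R -> R) (a b : Rbar) (x y theta : R -> R) (k : R).
Hypothesis HM : smooth M.
Hypothesis Hs : zero_energy_solution M a b x y.
Hypothesis Hk0 : k <> 0.
Hypothesis Hk : forall s, in_open a b s -> x s = k * r2 (x s) (y s).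
Hypothesis Hth : forall t, in_open a b t ->
              continuous theta t /\
              x t = sqrt (r2 (x t) (y t)) * cos (theta t) /\
              y t = sqrt (r2 (x t) (y t)) * sin (theta t).

Lemma x_nz s : in_open a b s -> x s <> 0.
Proof.
  intros H. destruct (Hs s H) as (Hnz & _). pose proof (r2_pos _ _ Hnz).
  rewrite Hk by auto. apply Rmult_integral_contrapositive; split; lra.
Qed.

Lemma sin_g s : in_open a b s -> sin (theta s - atan (y s / x s)) = 0.
Proof.
  intros H. pose proof (x_nz s H) as Hx. destruct (Hth s H) as (_ & Hxc & Hys).
  set (w := y s / x s).
  assert (Hw : w * cos (theta s) = sin (theta s)).
  { destruct (Hs s H) as (Hnz & _). pose proof (r2_pos _ _ Hnz) as Hr.
    assert (Hsq : 0 < sqrt (r2 (x s) (y s))) by (apply sqrt_lt_R0; auto).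
    set (r := sqrt (r2 (x s) (y s))) in *. clearbody r.
    assert (Hc : cos (theta s) <> 0).
    { intro E. rewrite E in Hxc. apply Hx. rewrite Hxc. ring. }
    unfold w. rewrite Hxc, Hys. field. split; lra. }
  assert (0 < sqrt (1 + w²)) by (apply sqrt_lt_R0; pose proof (Rle_0_sqr w); lra).
  rewrite sin_minus, cos_atan, sin_atan. rewrite <- Hw. field. lra.
Qed.

Lemma cont_atan s : in_open a b s -> continuous (fun u => atan (y u / x u)) s.
Proof.
  intros H. pose proof (x_nz s H) as Hx. destruct (Hs s H) as (_ & Hxd & Hyd & _).
  apply (ex_derive_continuous (K:=R_AbsRing) (V:=R_NormedModule)).
  auto_derive. repeat split; auto.
Qed.

Lemma local_theta s : in_open a b s ->
  locally s (fun u => atan (y u / x u) + (theta s - atan (y s / x s)) = theta u).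
Proof.
  intros H.
  assert (Hc : continuous (fun u => theta u - atan (y u / x u)) s).
  { apply (continuous_minus (K:=R_AbsRing) (V:=R_NormedModule)).
    - apply Hth; auto.
    - apply cont_atan; auto. }
  pose proof (cont_ball _ s PI Hc PI_RGT_0) as Hb.
  pose proof (filter_and _ _ Hb (locally_in_open a b s H)) as H2.
  eapply filter_imp; [|exact H2]. simpl. intros u [Hu Hin].
  destruct (sin_eq_0_0 _ (sin_g s H)) as [m Hm].
  destruct (sin_eq_0_0 _ (sin_g u Hin)) as [m' Hm'].
  rewrite Hm, Hm' in Hu.
  assert (E : m' = m).
  { assert (Z : (m' - m)%Z = 0%Z); [|lia].
    apply IZR_small. rewrite minus_IZR.
    replace (IZR m' * PI - IZR m * PI) with ((IZR m' - IZR m) * PI) in Hu by ring.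
    rewrite Rabs_mult, (Rabs_right PI) in Hu by (pose proof PI_RGT_0; lra).
    pose proof PI_RGT_0. nra. }
  subst m'. rewrite Hm. lra.
Qed.

Definition dth s := (x s * Derive y s - y s * Derive x s) / r2 (x s) (y s).

Lemma theta_deriv s : in_open a b s -> is_derive theta s (dth s).
Proof.
  intros H. pose proof (x_nz s H) as Hx. destruct (Hs s H) as (Hnz & Hxd & Hyd & _).
  pose proof (r2_pos _ _ Hnz) as Hr.
  eapply is_derive_ext_loc; [exact (local_theta s H)|].
  unfold dth, r2 in *. auto_derive.
  - repeat split; auto.
  - change (fun x0 : R => x x0) with x. change (fun x0 : R => y x0) with y.
    field. repeat split; auto; lra.
Qed.

Lemma dth_cont s : in_open a b s -> continuous dth s.
Proof.
  intros H. destruct (Hs s H) as (Hnz & Hxd & Hyd & Hxd' & Hyd' & _).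
  pose proof (r2_pos _ _ Hnz) as Hr.
  apply (ex_derive_continuous (K:=R_AbsRing) (V:=R_NormedModule)).
  unfold dth, r2 in *. auto_derive. repeat split; auto; lra.
Qed.

Let c1 := / k.
Let f := fun phi => (cos phi) ^ 2 / sqrt (- 2 * M (tan phi / c1)).

Lemma cos_nz s : in_open a b s -> cos (theta s) <> 0.
Proof.
  intros H E. apply (x_nz s H). destruct (Hth s H) as (_ & Hxc & _).
  rewrite Hxc, E. ring.
Qed.

Lemma tan_eq s : in_open a b s -> tan (theta s) / c1 = y s / r2 (x s) (y s).
Proof.
  intros H. pose proof (x_nz s H) as Hx. pose proof (cos_nz s H) as Hc.
  destruct (Hs s H) as (Hnz & _). pose proof (r2_pos _ _ Hnz) as Hr.
  destruct (Hth s H) as (_ & Hxc & Hys). pose proof (Hk s H) as Hks.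
  assert (Hsq : 0 < sqrt (r2 (x s) (y s))) by (apply sqrt_lt_R0; auto).
  set (R0 := r2 (x s) (y s)) in *. clearbody R0.
  set (r := sqrt R0) in *. clearbody r.
  replace R0 with (x s / k) by (rewrite Hks; field; auto).
  unfold c1, tan. rewrite Hxc, Hys. field. repeat split; auto; lra.
Qed.

Hypothesis HV : forall t, in_open a b t -> V M (x t) (y t) < 0.

Lemma M_eq s : in_open a b s -> M (tan (theta s) / c1) = V M (x s) (y s) * (r2 (x s) (y s))^2.
Proof.
  intros H. rewrite tan_eq by auto. destruct (Hs s H) as (Hnz & _).
  pose proof (r2_pos _ _ Hnz) as Hr. unfold V. field. lra.
Qed.

Lemma M_neg s : in_open a b s -> M (tan (theta s) / c1) < 0.
Proof.
  intros H. rewrite M_eq by auto. destruct (Hs s H) as (Hnz & _).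
  pose proof (r2_pos _ _ Hnz) as Hr. pose proof (HV s H).
  assert (0 < r2 (x s) (y s) ^ 2) by (apply pow_lt; auto). nra.
Qed.

Lemma f_cont s : in_open a b s -> continuous f (theta s).
Proof.
  intros H. pose proof (cos_nz s H). pose proof (M_neg s H).
  apply (ex_derive_continuous (K:=R_AbsRing) (V:=R_NormedModule)).
  unfold f. auto_derive. change (tan (theta s) * / c1) with (tan (theta s) / c1).
  repeat split.
  - apply smooth_ex_derive; auto.
  - unfold tan. auto_derive. auto.
  - lra.
  - apply Rgt_not_eq. apply sqrt_lt_R0. lra.
Qed.

Hypothesis HI : forall t, in_open a b t -> Iq (x t) (y t) (Derive x t) (Derive y t) = 0.

Lemma h_sq s : in_open a b s -> (dth s * f (theta s))^2 = k^6.
Proof.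
  intros H. pose proof (M_eq s H) as HMe. pose proof (M_neg s H) as HMn.
  pose proof (HV s H) as HVs. pose proof (HI s H) as HIs. pose proof (Hk s H) as Hks.
  destruct (Hs s H) as (Hnz & _ & _ & _ & _ & _ & _ & En).
  pose proof (r2_pos _ _ Hnz) as Hr.
  destruct (Hth s H) as (_ & Hxc & _).
  assert (Hrr : sqrt (r2 (x s) (y s)) * sqrt (r2 (x s) (y s)) = r2 (x s) (y s)) by (apply sqrt_sqrt; lra).
  assert (HSS : sqrt (-2 * M (tan (theta s) / c1)) * sqrt (-2 * M (tan (theta s) / c1))
                = -2 * M (tan (theta s) / c1)) by (apply sqrt_sqrt; lra).
  assert (HS : 0 < sqrt (-2 * M (tan (theta s) / c1))) by (apply sqrt_lt_R0; lra).
  unfold dth, f. unfold Iq in HIs.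
  set (S := sqrt (-2 * M (tan (theta s) / c1))) in *. clearbody S.
  rewrite HMe in HSS. clear HMe HMn.
  set (c := cos (theta s)) in *. clearbody c.
  set (V0 := V M (x s) (y s)) in *. clearbody V0.
  set (R0 := r2 (x s) (y s)) in *. clearbody R0.
  set (r := sqrt R0) in *. clearbody r.
  set (X := x s) in *. set (Y := y s) in *. set (vx := Derive x s) in *. set (vy := Derive y s) in *.
  clearbody X Y vx vy.
  assert (A : (X * vy - Y * vx)^2 = X^2 * (-2 * V0)).
  { transitivity (X^2 * (vx^2+vy^2) - 2 * vx * ((X ^ 2 - Y ^ 2) / 2 * vx + X * Y * vy)).
    - field.
    - rewrite HIs. replace (vx^2+vy^2) with (-2*V0) by lra. ring. }
  assert (Hc4 : c^4 * R0^2 = X^4).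
  { rewrite Hxc, <- Hrr. ring. }
  transitivity ((X * vy - Y * vx)^2 * (c^4 * R0^2) / (R0^4 * (S * S))).
  - field. lra.
  - rewrite A, Hc4, HSS, Hks. field. split; lra.
Qed.

Let h := fun s => dth s * f (theta s).

Lemma h_cont s : in_open a b s -> continuous h s.
Proof.
  intros H. apply (continuous_mult (K:=R_AbsRing) dth (fun u => f (theta u))).
  - apply dth_cont; auto.
  - apply (continuous_comp theta f). apply Hth; auto. apply f_cont; auto.
Qed.

Lemma sq_eq_abs A B K : A^2 = B^2 -> K^2 = B^2 -> 0 < K -> Rabs (A - B) < K -> A = B.
Proof.
  intros H1 H2 HK H3.
  assert (E : (A - B) * (A + B) = 0) by (ring_simplify; lra).
  apply Rmult_integral in E. destruct E as [E|E]; [lra|].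
  assert (A = - B) by lra. subst A.
  replace (- B - B) with (-2 * B) in H3 by ring.
  rewrite Rabs_mult in H3. rewrite Rabs_left in H3 by lra.
  assert (Rabs B = K).
  { assert (Rabs B ^2 = K ^2). { rewrite pow2_abs. lra. }
    pose proof (Rabs_pos B). nra. }
  lra.
Qed.

Lemma h_loc s : in_open a b s -> locally s (fun u => h s = h u).
Proof.
  intros H.
  assert (Hpos : 0 < Rabs k ^ 3) by (apply pow_lt; apply Rabs_pos_lt; auto).
  pose proof (cont_ball h s _ (h_cont s H) Hpos) as Hb.
  pose proof (filter_and _ _ Hb (locally_in_open a b s H)) as H2.
  eapply filter_imp; [|exact H2]. simpl. intros u [Hu Hin].
  symmetry. apply (sq_eq_abs _ _ (Rabs k ^ 3)); auto.
  - unfold h. rewrite !h_sq; auto.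
  - unfold h. rewrite h_sq; auto. replace ((Rabs k ^ 3)^2) with ((Rabs k ^2)^3) by ring.
    rewrite pow2_abs. ring.
Qed.

Lemma h_deriv s : in_open a b s -> is_derive h s 0.
Proof.
  intros H. eapply is_derive_ext_loc; [exact (h_loc s H)|]. exact (is_derive_const (K:=R_AbsRing) (V:=R_NormedModule) (h s) s).
Qed.

Lemma quad ts : in_open a b ts ->
  exists eps : R, (eps = 1 \/ eps = -1) /\
    forall t0 t, in_open a b t0 -> in_open a b t ->
      t - t0 = eps * c1 ^ 3 * RInt f (theta t0) (theta t).
Proof.
  intros Hts. exists (c1 ^ 3 * h ts).
  assert (He : (c1^3 * h ts)^2 = 1).
  { replace ((c1^3 * h ts)^2) with (c1^6 * (h ts)^2) by ring.
    unfold h. rewrite h_sq by auto. unfold c1. field. auto. }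
  split.
  - assert ((c1^3 * h ts - 1) * (c1^3 * h ts + 1) = 0) by (ring_simplify; lra).
    apply Rmult_integral in H. lra.
  - intros t0 t H0 H1.
    rewrite <- (RInt_comp f theta dth t0 t).
    + rewrite (RInt_ext _ (fun _ => h ts)).
      * rewrite RInt_const. change (scal (t - t0) (h ts)) with ((t - t0) * h ts).
        transitivity ((c1 ^ 3 * h ts)^2 * (t - t0)); [rewrite He; ring | ring].
      * intros u Hu. change (scal (dth u) (f (theta u))) with (h u).
        apply (deriv0_const a b h h_deriv); auto.
        apply (between a b t0 t); auto. lra.
    + intros u Hu. apply f_cont. apply (between a b t0 t); auto.
    + intros u Hu. split.
      * apply theta_deriv. apply (between a b t0 t); auto.
      * apply dth_cont. apply (between a b t0 t); auto.
Qed.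
End Theta.

Theorem mainTheorem7 (M : R -> R) (HM : smooth M) :
  (forall x y : R, ~ (x = 0 /\ y = 0) ->
     (x ^ 2 - y ^ 2) / 2 * dVx M x y + x * y * dVy M x y + 2 * x * V M x y = 0)
  /\
  (forall (a b : Rbar) (x y : R -> R),
     zero_energy_solution M a b x y ->
     (forall t, in_open a b t ->
        is_derive (fun s => Iq (x s) (y s) (Derive x s) (Derive y s)) t 0)
     /\
     ((forall t, in_open a b t -> Iq (x t) (y t) (Derive x t) (Derive y t) = 0) ->
      (exists t, in_open a b t /\ x t <> 0) ->
      exists c1 : R, c1 <> 0 /\
        (forall t, in_open a b t -> (x t - c1 / 2) ^ 2 + (y t) ^ 2 = c1 ^ 2 / 4) /\
        ((forall t, in_open a b t -> V M (x t) (y t) < 0) ->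
         forall theta : R -> R,
           (forall t, in_open a b t ->
              continuous theta t /\
              x t = sqrt (r2 (x t) (y t)) * cos (theta t) /\
              y t = sqrt (r2 (x t) (y t)) * sin (theta t)) ->
           exists eps : R, (eps = 1 \/ eps = -1) /\
             forall t0 t, in_open a b t0 -> in_open a b t ->
               t - t0 = eps * c1 ^ 3 *
                 RInt (fun phi => (cos phi) ^ 2 / sqrt (- 2 * M (tan phi / c1)))
                      (theta t0) (theta t)))).
Proof.
  split.
  - intros x y H. apply pde; auto.
  - intros a b x y Hs. split.
    + intros t Ht. apply (firstint M a b); auto.
    + intros HI Hex.
      destruct (circle_k M a b x y Hs HI Hex) as [k [Hk0 Hk]].
      exists (/ k). split; [apply Rinv_neq_0_compat; auto|]. split.
      * intros t Ht. pose proof (Hk t Ht) as Hks. unfold r2 in Hks.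
        transitivity (x t ^ 2 + y t ^ 2 - x t / k + (/ k) ^ 2 / 4).
        -- field. auto.
        -- assert (E : x t / k = x t ^ 2 + y t ^ 2) by (rewrite Hks at 1; field; auto).
           rewrite E. ring.
      * intros HV theta Hth. destruct Hex as [ts [Hts _]].
        eapply quad; eauto.
Qed.
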